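(* Let $P$ and $Q$ be irreducible transition matrices on the finite set $S$, both reversible with respect to $\pi$, with eigenvalues (counting multiplicity) $1=\lambda_1\ge\lambda_2\ge\dots\ge\lambda_n$ for $P$ and $1=\beta_1\ge\beta_2\ge\dots\ge\beta_n$ for $Q$. Suppose $\max_{i\ge2}\lambda_i\le\min_{i\ge2}\beta_i$, i.e. $\lambda_2\le\beta_n$. Then $P$ efficiency-dominates $Q$.
   Context: $S$ is a finite set with $|S|=n$, and $\pi$ is a probability distribution on $S$ with $\pi(x)>0$ for all $x$. A transition matrix $P$ is reversible with respect to $\pi$ if $\pi(x)P(x,y)=\pi(y)P(y,x)$ for all $x,y$ (its eigenvalues are then real); irreducible if every state can be reached from every other with positive probability in some number of steps. For a Markov chain $X_1,X_2,\dots$ with transition matrix $P$ and $X_1\sim\pi$, $v(f,P)=\lim_{N\to\infty}\frac1N\mathrm{Var}\big(\sum_{i=1}^N f(X_i)\big)$. $P$ efficiency-dominates $Q$ if $v(f,P)\le v(f,Q)$ for all $f:S\to\mathbb R$. *)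

(* Defs.v *)
From HB Require Import structures.
From mathcomp Require Import all_boot all_order all_algebra.
From mathcomp Require Import all_classical all_reals all_analysis.
Import numFieldNormedType.Exports.
Set Implicit Arguments. Unset Strict Implicit. Unset Printing Implicit Defensive.
Import Order.TTheory GRing.Theory Num.Theory.
Local Open Scope ring_scope.
Local Open Scope classical_set_scope.

Definition prob_dist (R : realType) (n : nat) (pi : 'I_n -> R) : Prop :=
  (forall x, 0 < pi x) /\ \sum_(x < n) pi x = 1.

Definition transition_matrix (R : realType) (n : nat) (P : 'M[R]_n) : Prop :=
  (forall x y, 0 <= P x y) /\ (forall x, \sum_(y < n) P x y = 1).

Definition reversible (R : realType) (n : nat) (pi : 'I_n -> R) (P : 'M[R]_n)
  : Prop := forall x y, pi x * P x y = pi y * P y x.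

Definition irreducible (R : realType) (n : nat) (P : 'M[R]_n) : Prop :=
  forall x y, exists k : nat, 0 < (P ^+ k) x y.

(* Law of the path (X_1, ..., X_{N+1}) of the chain with X_1 ~ pi. *)
Definition path_prob (R : realType) (n : nat) (pi : 'I_n -> R) (P : 'M[R]_n)
  (N : nat) (w : {ffun 'I_N.+1 -> 'I_n}) : R :=
  pi (w ord0) * \prod_(i < N) P (w (widen_ord (leqnSn N) i)) (w (lift ord0 i)).

Definition path_sum (R : realType) (n : nat) (f : 'I_n -> R) (N : nat)
  (w : {ffun 'I_N.+1 -> 'I_n}) : R := \sum_(i < N.+1) f (w i).

Definition path_mean (R : realType) (n : nat) (pi : 'I_n -> R) (P : 'M[R]_n)
  (f : 'I_n -> R) (N : nat) : R :=
  \sum_(w : {ffun 'I_N.+1 -> 'I_n}) path_prob pi P w * path_sum f w.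

Definition path_var (R : realType) (n : nat) (pi : 'I_n -> R) (P : 'M[R]_n)
  (f : 'I_n -> R) (N : nat) : R :=
  \sum_(w : {ffun 'I_N.+1 -> 'I_n})
     path_prob pi P w * (path_sum f w - path_mean pi P f N) ^+ 2.

Definition avg_var (R : realType) (n : nat) (pi : 'I_n -> R) (P : 'M[R]_n)
  (f : 'I_n -> R) (N : nat) : R :=
  path_var pi P f N / N.+1%:R.

Definition asymp_var (R : realType) (n : nat) (pi : 'I_n -> R) (P : 'M[R]_n)
  (f : 'I_n -> R) (v : R) : Prop :=
  (avg_var pi P f @ \oo --> v)%classic.

Definition efficiency_dominates (R : realType) (n : nat) (pi : 'I_n -> R)
  (P Q : 'M[R]_n) : Prop :=
  forall f : 'I_n -> R, exists vP vQ : R,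
    asymp_var pi P f vP /\ asymp_var pi Q f vQ /\ vP <= vQ.

Definition ordered_spectrum (R : realType) (n : nat) (A : 'M[R]_n)
  (lam : 'I_n -> R) : Prop :=
  char_poly A = \prod_(i < n) ('X - (lam i)%:P) /\
  (forall i j : 'I_n, (i <= j)%N -> lam j <= lam i).

(* Main.v *)
Require Import Defs.
From HB Require Import structures.
From mathcomp Require Import all_boot all_order all_algebra.
From mathcomp Require Import all_classical all_reals all_analysis.
From mathcomp Require Import ring lra zify.
From mathcomp Require complex spectral sesquilinear.
Import numFieldNormedType.Exports.
Import Order.TTheory GRing.Theory Num.Theory.
Local Open Scope ring_scope.

Module SpecPart.
Import complex spectral sesquilinear.
Local Open Scope sesquilinear_scope.
Section S.
Variable R : realType.
Local Notation C := (R[i]).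
Local Notation rc := (real_complex R).
Local Notation Re := (@complex.Re R).
Local Notation Im := (@complex.Im R).

Lemma Re_add (u v : C) : Re (u + v) = Re u + Re v. Proof. move: u v => [a b] [c d]. by []. Qed.
Lemma Im_add (u v : C) : Im (u + v) = Im u + Im v. Proof. move: u v => [a b] [c d]. by []. Qed.
Lemma Re_sum (I : finType) (F : I -> C) : Re (\sum_i F i) = \sum_i Re (F i).
Proof. by elim/big_rec2: _ => // i y1 y2 _ <-; rewrite Re_add. Qed.
Lemma Im_sum (I : finType) (F : I -> C) : Im (\sum_i F i) = \sum_i Im (F i).
Proof. by elim/big_rec2: _ => // i y1 y2 _ <-; rewrite Im_add. Qed.
Lemma Re_mulr (u : C) (a : R) : Re (u * rc a) = Re u * a.
Proof. by case: u => x y /=; rewrite mulr0 subr0. Qed.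
Lemma Im_mulr (u : C) (a : R) : Im (u * rc a) = Im u * a.
Proof. by case: u => x y /=; rewrite mulr0 add0r. Qed.
Lemma Re_mull (u : C) (a : R) : Re (rc a * u) = a * Re u.
Proof. by case: u => x y /=; rewrite mul0r subr0. Qed.
Lemma Im_mull (u : C) (a : R) : Im (rc a * u) = a * Im u.
Proof. by case: u => x y /=; rewrite mul0r addr0. Qed.
Lemma conjM_self (u : C) : Num.conj u * u = rc ((Re u)^+2 + (Im u)^+2).
Proof.
case: u => a b. simpc. rewrite /= !expr2 [b * a]mulrC subrr. reflexivity. Qed.


Lemma sym_spectral n (A : 'M[R]_n) : A^T = A ->
  exists (d : 'I_n -> R) (E1 E2 : 'I_n -> 'rV[R]_n),
   (forall i, E1 i *m A = d i *: E1 i /\ E2 i *m A = d i *: E2 i /\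
              (E1 i != 0 \/ E2 i != 0)) /\
   (forall (x : 'rV[R]_n) k, (x *m A ^+ k *m x^T) 0 0 =
      \sum_i (((x *m (E1 i)^T) 0 0)^+2 + ((x *m (E2 i)^T) 0 0)^+2) * d i ^+ k).
Proof.
move=> sA.
pose Ac := map_mx rc A.
have Asym : Ac \is symmetricmx.
  apply/is_hermitianmxP; rewrite expr0 scale1r map_mx_id //.
  apply/matrixP => i j; rewrite !mxE; move/matrixP: sA => /(_ j i); rewrite mxE => ->; reflexivity.
have Areal : Ac \is a mxOver Num.real.
  by apply/mxOverP => i j; rewrite mxE; apply/complex_realP; eexists; reflexivity.
have Anorm := symmetric_normalmx Asym Areal.
have Aherm := realsym_hermsym Asym Areal.
set U := spectralmx Ac; set D := spectral_diag Ac.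
have AE : Ac = invmx U *m diag_mx D *m U by apply/orthomx_spectralP.
have Uu : U \is unitarymx := spectral_unitarymx Ac.
have Uunit : U \in unitmx := spectral_unit Ac.
have UU : U *m U^t* = 1%:M by apply/unitarymxP.
have iU : invmx U = U^t* := invmx_unitary Uu.
have Dreal : D \is a mxOver Num.real := hermitian_spectral_diag_real Aherm.
have Dr i : D 0 i = rc (Re (D 0 i)).
  by rewrite RRe_real //; apply: (mxOverP Dreal).
have UA : U *m Ac = diag_mx D *m U.
  by rewrite {1}AE -!mulmxA mulKVmx.
exists (fun i => Re (D 0 i)), (fun i => \row_j Re (U i j)), (fun i => \row_j Im (U i j)).
split.
  move=> i; have UAij j : \sum_k U i k * rc (A k j) = D 0 i * U i j.
    move/matrixP: UA => /(_ i j); rewrite mul_diag_mx !mxE => <-; apply: eq_bigr => k _; rewrite mxE; reflexivity.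
  split; [|split].
  - apply/rowP => j; rewrite !mxE; under eq_bigr do rewrite mxE.
    move: (congr1 Re (UAij j)); rewrite Re_sum Dr Re_mull => <-.
    by apply: eq_bigr => k _; rewrite Re_mulr.
  - apply/rowP => j; rewrite !mxE; under eq_bigr do rewrite mxE.
    move: (congr1 Im (UAij j)); rewrite Im_sum Dr Im_mull => <-.
    by apply: eq_bigr => k _; rewrite Im_mulr.
  - case: (eqVneq (\row_j Re (U i j)) 0) => [E1|]; last by left.
    case: (eqVneq (\row_j Im (U i j)) 0) => [E2|]; last by right.
    exfalso.
    have U0 j : U i j = 0.
      move/rowP: E1 => /(_ j); move/rowP: E2 => /(_ j); rewrite !mxE.
      by case: (U i j) => a b /= -> ->.
    move/matrixP: UU => /(_ i i); rewrite !mxE eqxx big1 ?mulr1n.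
      by move/eqP; rewrite eq_sym oner_eq0.
    by move=> j _; rewrite U0 mul0r.
move=> x k.
have mapX j : map_mx rc (A ^+ j) = Ac ^+ j.
  elim: j => [|j IH]; first by rewrite !expr0 map_mx1.
  by rewrite !exprS -!mulmxE map_mxM IH.
have Apow : Ac ^+ k = U^t* *m diag_mx (\row_i (D 0 i ^+ k)) *m U.
  elim: k => [|k IH].
    rewrite expr0 -iU (_ : \row_i _ = const_mx 1) ?diag_const_mx ?mulmx1 ?mulVmx //.
    by apply/rowP => i; rewrite !mxE expr0.
  rewrite exprS IH {1}AE -mulmxE iU !mulmxA -[U^t* *m _ *m U *m U^t*]mulmxA UU mulmx1.
  rewrite -[U^t* *m _ *m diag_mx _]mulmxA mulmx_diag; congr (_ *m diag_mx _ *m _).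
  by apply/rowP => i; rewrite !mxE exprS.
apply: (@complexI R).
rewrite rmorph_sum.
have -> : rc ((x *m A ^+ k *m x^T) 0 0) = (map_mx rc (x *m A ^+ k *m x^T)) 0 0 by rewrite [RHS]mxE.
rewrite !map_mxM -map_trmx mapX Apow !mulmxA -mulmxA mxE.
apply: eq_bigr => i _.
rewrite mul_mx_diag !mxE.
have cu : \sum_j (map_mx rc x) 0 j * (U^t*) j i = Num.conj (\sum_j U i j * (map_mx rc x)^T j 0).
  rewrite rmorph_sum; apply: eq_bigr => j _; rewrite !mxE rmorphM mulrC.
  congr (_ * _); symmetry; exact: conjc_real.
rewrite cu Dr; set u := \sum_j U i j * _.
rewrite -rmorphXn mulrAC conjM_self -rmorphM; congr (_ ((_ ^+ 2 + _ ^+ 2) * _ ^+ k)).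
- rewrite /u Re_sum; apply: eq_bigr => j _; rewrite !mxE Re_mulr mulrC; reflexivity.
- rewrite /u Im_sum; apply: eq_bigr => j _; rewrite !mxE Im_mulr mulrC; reflexivity.
Qed.
End S.
End SpecPart.
Import SpecPart.

Module MarkovPart.
Set Implicit Arguments. Unset Strict Implicit. Unset Printing Implicit Defensive.
Definition distn' (s t : nat) := ((s - t) + (t - s))%N.
Section M.
Variables (R : realType) (n : nat) (P : 'M[R]_n).

Definition Ep N (mu : 'I_n -> R) (F : {ffun 'I_N.+1 -> 'I_n} -> R) :=
  \sum_w path_prob mu P w * F w.
Arguments Ep N mu F : clear implicits.

Definition fcons N (x : 'I_n) (w : {ffun 'I_N.+1 -> 'I_n}) : {ffun 'I_N.+2 -> 'I_n} :=
  [ffun i => if unlift ord0 i is Some j then w j else x].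

Lemma fcons0 N x (w : {ffun 'I_N.+1 -> 'I_n}) : fcons x w ord0 = x.
Proof. by rewrite ffunE unlift_none. Qed.

Lemma fconsS N x (w : {ffun 'I_N.+1 -> 'I_n}) j : fcons x w (lift ord0 j) = w j.
Proof. by rewrite ffunE liftK. Qed.

Lemma sum_fcons N (G : {ffun 'I_N.+2 -> 'I_n} -> R) :
  \sum_w G w = \sum_x \sum_(w' : {ffun 'I_N.+1 -> 'I_n}) G (fcons x w').
Proof.
rewrite [RHS]pair_big /=.
apply: (reindex (fun p : 'I_n * {ffun 'I_N.+1 -> 'I_n} => fcons p.1 p.2)).
exists (fun w : {ffun 'I_N.+2 -> 'I_n} => (w ord0, [ffun j : 'I_N.+1 => w (lift ord0 j)])) => [[x w'] _ | w _] /=.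
  by rewrite fcons0; congr pair; apply/ffunP => j; rewrite ffunE fconsS.
apply/ffunP => i; rewrite ffunE; case: unliftP => [j ->|->] /=; by rewrite ?ffunE.
Qed.

Lemma sum_ffun1 (G : {ffun 'I_1 -> 'I_n} -> R) :
  \sum_w G w = \sum_x G [ffun _ => x].
Proof.
apply: (reindex (fun x => [ffun _ : 'I_1 => x])).
exists (fun w : {ffun 'I_1 -> 'I_n} => w ord0) => [x _ | w _] /=; first by rewrite ffunE.
by apply/ffunP => i; rewrite ffunE (ord1 i).
Qed.

Lemma prob_fcons N mu x (w' : {ffun 'I_N.+1 -> 'I_n}) :
  path_prob mu P (fcons x w') = mu x * path_prob (fun y => P x y) P w'.
Proof.
rewrite /path_prob big_ord_recl.
have -> : widen_ord (leqnSn N.+1) ord0 = ord0 by apply: val_inj.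
rewrite fcons0 fconsS /= !mulrA; congr (_ * _).
apply: eq_bigr => i _.
have -> : widen_ord (leqnSn N.+1) (lift ord0 i) = lift ord0 (widen_ord (leqnSn N) i)
  by apply: val_inj.
by rewrite !fconsS.
Qed.

Lemma Ep_ext N mu (F G : {ffun 'I_N.+1 -> 'I_n} -> R) :
  (forall w, F w = G w) -> Ep N mu F = Ep N mu G.
Proof. by move=> FG; apply: eq_bigr => w _; rewrite FG. Qed.

Lemma Ep_fcons N mu (F : {ffun 'I_N.+2 -> 'I_n} -> R) :
  Ep N.+1 mu F = \sum_x mu x * Ep N (fun y => P x y) (fun w' => F (fcons x w')).
Proof.
rewrite /Ep sum_fcons; apply: eq_bigr => x _; rewrite mulr_sumr.
by apply: eq_bigr => w' _; rewrite prob_fcons mulrA.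
Qed.

Hypothesis Pst : transition_matrix P.

Lemma Ep_const N mu c : Ep N mu (fun _ => c) = c * \sum_x mu x.
Proof.
elim: N mu => [|N IH] mu.
  rewrite /Ep sum_ffun1 mulr_sumr; apply: eq_bigr => x _.
  by rewrite /path_prob big_ord0 ffunE mulr1 mulrC.
rewrite Ep_fcons mulr_sumr; apply: eq_bigr => x _.
by rewrite IH (proj2 Pst) mulr1 mulrC.
Qed.

Lemma Ep0 N mu G : Ep N mu (fun w => G (w ord0)) = \sum_x mu x * G x.
Proof.
case: N => [|N].
  rewrite /Ep sum_ffun1; apply: eq_bigr => x _.
  by rewrite /path_prob big_ord0 !ffunE mulr1.
rewrite Ep_fcons; apply: eq_bigr => x _.
rewrite (Ep_ext _ (G := fun _ => G x)); last by move=> w; rewrite fcons0.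
by rewrite Ep_const (proj2 Pst) mulr1.
Qed.

Lemma sum_delta (h : 'I_n -> R) x : \sum_y (1%:M : 'M[R]_n) x y * h y = h x.
Proof.
rewrite (bigD1 x) //= big1 => [|y /negbTE yx]; first by rewrite mxE eqxx mul1r addr0.
by rewrite mxE eq_sym yx mul0r.
Qed.

Lemma sum_deltaC (h : 'I_n -> R) x : \sum_y h y * (1%:M : 'M[R]_n) y x = h x.
Proof.
rewrite (bigD1 x) //= big1 => [|y /negbTE yx]; first by rewrite mxE eqxx mulr1 addr0.
by rewrite mxE yx mulr0.
Qed.

Lemma powS_apply t (h : 'I_n -> R) x :
  \sum_y (P ^+ t.+1) x y * h y = \sum_z P x z * \sum_y (P ^+ t) z y * h y.
Proof.
rewrite exprS -mulmxE; under eq_bigr do rewrite mxE big_distrl /=.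
rewrite exchange_big /=; apply: eq_bigr => z _; rewrite mulr_sumr.
by apply: eq_bigr => y _; rewrite mulrA.
Qed.

Lemma powS_left t (mu : 'I_n -> R) x :
  \sum_z mu z * (P ^+ t.+1) z x = \sum_u (\sum_z mu z * P z u) * (P ^+ t) u x.
Proof.
rewrite exprS -mulmxE; under eq_bigr do rewrite mxE big_distrr /=.
rewrite exchange_big /=; apply: eq_bigr => u _; rewrite mulr_suml.
by apply: eq_bigr => z _; rewrite mulrA.
Qed.

Lemma fcons_inord N x (w : {ffun 'I_N.+1 -> 'I_n}) t : (t <= N)%N ->
  fcons x w (inord t.+1) = w (inord t).
Proof.
move=> tN; have -> : (inord t.+1 : 'I_N.+2) = lift ord0 (inord t).
  by apply: val_inj; rewrite /= /bump /= add1n !inordK.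
by rewrite fconsS.
Qed.

Lemma keyA t : forall N mu (g h : 'I_n -> R), (t <= N)%N ->
  Ep N mu (fun w => g (w ord0) * h (w (inord t))) =
  \sum_x mu x * g x * \sum_y (P ^+ t) x y * h y.
Proof.
elim: t => [|t IH] N mu g h tN.
  apply: etrans (etrans _ (Ep0 N mu (fun z => g z * h z))) _.
    by apply: Ep_ext => w /=; congr (_ * h (w _)); apply: val_inj; rewrite /= inordK.
  by apply: eq_bigr => x _; rewrite expr0 sum_delta mulrA.
case: N tN => [//|N] tN.
rewrite Ep_fcons; apply: eq_bigr => x _.
have E := IH N (fun y => P x y) (fun _ => g x) h tN.
transitivity (mu x * Ep N (fun y => P x y) (fun w => (fun _ => g x) (w ord0) * h (w (inord t)))).
  by congr (_ * _); apply: Ep_ext => w; rewrite fcons0 fcons_inord.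
rewrite E powS_apply -mulrA; congr (_ * _).
rewrite mulr_sumr; apply: eq_bigr => z _.
by rewrite mulrA [g x * _]mulrC.
Qed.

Lemma keyB s : forall t N mu (g h : 'I_n -> R), (s <= t)%N -> (t <= N)%N ->
  Ep N mu (fun w => g (w (inord s)) * h (w (inord t))) =
  \sum_x (\sum_z mu z * (P ^+ s) z x) * g x * \sum_y (P ^+ (t - s)) x y * h y.
Proof.
elim: s => [|s IH] t N mu g h st tN.
  rewrite (Ep_ext _ (G := fun w => g (w ord0) * h (w (inord t)))); last first.
    by move=> w; congr (g (w _) * _); apply: val_inj; rewrite /= inordK.
  rewrite keyA // subn0; apply: eq_bigr => x _; by rewrite expr0 sum_deltaC.
case: t st tN => [//|t] st tN; case: N tN => [//|N] tN.
rewrite Ep_fcons.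
transitivity (\sum_x mu x * Ep N (fun y => P x y) (fun w => g (w (inord s)) * h (w (inord t)))).
  apply: eq_bigr => x _; congr (_ * _); apply: Ep_ext => w.
  by rewrite !fcons_inord //; lia.
under eq_bigr => x _ do rewrite IH //.
rewrite subSS.
under eq_bigr => x _ do rewrite mulr_sumr.
rewrite exchange_big /=; apply: eq_bigr => y _.
rewrite powS_left.
under eq_bigr do rewrite !mulrA.
rewrite -mulr_suml; congr (_ * _); rewrite -mulr_suml; congr (_ * _).
under eq_bigr do rewrite mulr_sumr.
rewrite exchange_big /=; apply: eq_bigr => u _.
rewrite mulr_suml; apply: eq_bigr => z _; by rewrite mulrA.
Qed.

Lemma pow_fix (g : 'I_n -> R) : (forall x, \sum_y P x y * g y = g x) ->
  forall k x, \sum_y (P ^+ k) x y * g y = g x.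
Proof.
move=> hg; elim=> [|k IH] x; first by rewrite expr0 sum_delta.
by rewrite powS_apply; under eq_bigr do rewrite IH; rewrite hg.
Qed.

Lemma pow_ge0 k x y : 0 <= (P ^+ k) x y.
Proof.
elim: k x y => [|k IH] x y; first by rewrite expr0 mxE ler0n.
rewrite exprS -mulmxE mxE; apply: sumr_ge0 => z _.
by apply: mulr_ge0; [exact: (proj1 Pst) | exact: IH].
Qed.

Lemma pow_sum1 k x : \sum_y (P ^+ k) x y = 1.
Proof.
have := pow_fix (g := fun _ => 1) _ k x; under eq_bigr do rewrite mulr1; apply.
by move=> z; under eq_bigr do rewrite mulr1; exact: (proj2 Pst).
Qed.

Lemma fixed_const (g : 'I_n -> R) : irreducible P ->
  (forall x, \sum_y P x y * g y = g x) -> forall x y, g x = g y.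
Proof.
move=> irr hg x.
case: (@arg_maxP _ _ _ x predT g isT) => m _ Hm.
suff H y : g y = g m by move=> y; rewrite (H x) (H y).
have [k Pk] := irr m y.
have S0 : \sum_z (P ^+ k) m z * (g m - g z) = 0.
  under eq_bigr do rewrite mulrBr.
  by rewrite sumrB -mulr_suml pow_sum1 mul1r pow_fix // subrr.
have /psumr_eq0P H0 := S0.
have H1 : forall z, true -> 0 <= (P ^+ k) m z * (g m - g z).
  move=> z _; apply: mulr_ge0; first exact: pow_ge0.
  by rewrite subr_ge0; exact: Hm.
move: (H0 H1 y isT) => /eqP; rewrite mulf_eq0 gt_eqF //= subr_eq0 => /eqP ->; by [].
Qed.

Lemma eig_bound (w : 'rV[R]_n) a : w != 0 -> w *m P = a *: w -> `|a| <= 1.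
Proof.
move=> w0 wP.
have key y : `|a| * `|w 0 y| <= \sum_x `|w 0 x| * P x y.
  move/rowP: wP => /(_ y); rewrite !mxE => E.
  rewrite -normrM -E (le_trans (ler_norm_sum _ _ _)) //.
  apply: ler_sum => x _; rewrite normrM (ger0_norm (proj1 Pst x y)) //.
have [y0 y0n] : exists y, w 0 y != 0.
  apply/existsP; apply: contraNT w0 => /existsPn H; apply/eqP/rowP => y.
  by move: (H y); rewrite negbK mxE => /eqP.
set S := \sum_y `|w 0 y|.
have Spos : 0 < S.
  rewrite /S (bigD1 y0) //= ltr_pwDl ?normr_gt0 //.
  by apply: sumr_ge0 => y _; rewrite normr_ge0.
rewrite -(ler_pM2r Spos) mul1r /S mulr_sumr.
apply: (le_trans (ler_sum _ (fun y _ => key y))).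
rewrite exchange_big /=; apply: ler_sum => x _.
by rewrite -mulr_sumr (proj2 Pst) mulr1.
Qed.
End M.
Lemma sum_cst_ord (R : realType) (m : nat) (c : R) : \sum_(i < m) c = m%:R * c.
Proof.
elim: m => [|m IH]; first by rewrite big_ord0 mul0r.
by rewrite big_ord_recr IH /= -natr1 mulrDl mul1r.
Qed.

Section V.
Variables (R : realType) (n : nat) (pi : 'I_n -> R) (P : 'M[R]_n).
Hypothesis Pst : transition_matrix P.
Hypothesis rev : reversible pi P.

Lemma stat s x : \sum_z pi z * (P ^+ s) z x = pi x.
Proof.
elim: s x => [|s IH] x; first by rewrite expr0 sum_deltaC.
transitivity (\sum_u (\sum_z pi z * (P ^+ s) z u) * P u x).
  rewrite exprSr -mulmxE; under eq_bigr do rewrite mxE mulr_sumr.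
  rewrite exchange_big /=; apply: eq_bigr => u _; rewrite mulr_suml.
  by apply: eq_bigr => z _; rewrite mulrA.
under eq_bigr do rewrite IH rev.
by rewrite -mulr_sumr (proj2 Pst) mulr1.
Qed.

Definition cmean (f : 'I_n -> R) := \sum_x pi x * f x.
Definition Cov (h : 'I_n -> R) k := \sum_x pi x * h x * \sum_y (P ^+ k) x y * h y.

Lemma covST N (h : 'I_n -> R) s t : (s <= N)%N -> (t <= N)%N ->
  @Ep _ _ P N pi (fun w => h (w (inord s)) * h (w (inord t))) = Cov h (distn' s t).
Proof.
move=> sN tN; case: (leqP s t) => st.
  rewrite (keyB Pst) // /Cov /distn' (_ : (s - t = 0)%N) ?add0n; last by apply/eqP; rewrite subn_eq0.
  by apply: eq_bigr => x _; rewrite stat.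
rewrite (@Ep_ext _ _ P N pi _ (fun w => h (w (inord t)) * h (w (inord s)))); last first.
  by move=> w; rewrite mulrC.
rewrite (keyB Pst) ?(ltnW st) // /Cov /distn' (_ : (t - s = 0)%N) ?addn0; last first.
  by apply/eqP; rewrite subn_eq0 ltnW.
by apply: eq_bigr => x _; rewrite stat.
Qed.

Lemma var_formula f N : path_var pi P f N =
  \sum_(s < N.+1) \sum_(t < N.+1) Cov (fun x => f x - cmean f) (distn' s t).
Proof.
have Em t : (t <= N)%N -> forall g, @Ep _ _ P N pi (fun w => g (w (inord t))) = cmean g.
  move=> tN g.
  apply: etrans (etrans _ (@keyB _ _ P Pst t t N pi g (fun _ => 1) (leqnn t) tN)) _.
    by apply: Ep_ext => w; rewrite mulr1.
  rewrite subnn; apply: eq_bigr => x _.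
  by rewrite stat expr0 sum_delta mulr1.
have mean : path_mean pi P f N = N.+1%:R * cmean f.
  rewrite /path_mean /path_sum; under eq_bigr do rewrite mulr_sumr.
  rewrite exchange_big /=.
  transitivity (\sum_(t < N.+1) cmean f).
    apply: eq_bigr => t _; rewrite -(Em t (ltn_ord t) f).
    by apply: eq_bigr => w _; rewrite inord_val.
  by rewrite sum_cst_ord.
set h := fun x => f x - cmean f.
rewrite /path_var mean.
have sumh w : path_sum f w - N.+1%:R * cmean f = \sum_(t < N.+1) h (w t).
  by rewrite /path_sum sumrB sum_cst_ord.
transitivity (\sum_w \sum_(s < N.+1) \sum_(t < N.+1)
    path_prob pi P w * (h (w s) * h (w t))).
  apply: eq_bigr => w _; rewrite sumh expr2 mulr_suml mulr_sumr.
  apply: eq_bigr => s _; rewrite !mulr_sumr; apply: eq_bigr => t _; by [].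
rewrite exchange_big /=; apply: eq_bigr => s _.
rewrite exchange_big /=; apply: eq_bigr => t _.
rewrite -(@covST N h s t (ltn_ord s) (ltn_ord t)).
by apply: eq_bigr => w _; rewrite !inord_val.
Qed.
End V.

End MarkovPart.
Import MarkovPart.

Module LimPart.
Section A.
Variable R : realType.

Definition TT (d : R) N := \sum_(s < N.+1) \sum_(t < N.+1) d ^+ distn' s t.
Definition GG (d : R) N := \sum_(s < N.+1) d ^+ (N.+1 - s).

Lemma GG_closed d N : (1 - d) * GG d N = d * (1 - d ^+ N.+1).
Proof.
elim: N => [|N IH]; first by rewrite /GG big_ord1 /= subn0 expr1; ring.
rewrite /GG big_ord_recl /= subn0.
have -> : \sum_(i < N.+1) d ^+ (N.+2 - bump 0 i) = GG d N.
  by apply: eq_bigr => i _; rewrite /bump /= add1n subSS.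
rewrite mulrDr IH !exprS; ring.
Qed.

Lemma TT_rec d N : TT d N.+1 = TT d N + 2 * GG d N + 1.
Proof.
rewrite /TT big_ord_recr /= [\sum_(t < N.+2) d ^+ distn' N.+1 t]big_ord_recr /=.
have -> : \sum_(i < N.+1) \sum_(t < N.+2) d ^+ distn' i t =
   \sum_(i < N.+1) (\sum_(t < N.+1) d ^+ distn' i t + d ^+ (N.+1 - i)).
  apply: eq_bigr => i _; rewrite big_ord_recr /=; congr (_ + _ ^+ _).
  by rewrite /distn' (_ : (i - N.+1 = 0)%N) ?add0n //; apply/eqP; rewrite subn_eq0 ltnW.
rewrite big_split /=.
have -> : \sum_(i < N.+1) d ^+ distn' N.+1 i = GG d N.
  apply: eq_bigr => i _; rewrite /distn' (_ : (i - N.+1 = 0)%N) ?addn0 //.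
  by apply/eqP; rewrite subn_eq0 ltnW.
rewrite /distn' subnn /= expr0 -/(GG d N); ring.
Qed.

Lemma TT_closed d N : (1 - d) ^+ 2 * TT d N =
  N.+1%:R * (1 - d ^+ 2) - 2 * d * (1 - d ^+ N.+1).
Proof.
elim: N => [|N IH].
  rewrite /TT !big_ord1 /distn' /= expr0 expr1; ring.
rewrite TT_rec.
have -> : (1-d)^+2 * (TT d N + 2 * GG d N + 1) =
  (1-d)^+2 * TT d N + 2*(1-d)*((1-d)*GG d N) + (1-d)^+2 by ring.
rewrite IH GG_closed.
have -> : N.+2%:R = N.+1%:R + 1 :> R by rewrite natr1.
move: (N.+1%:R) => m; rewrite !exprS; ring.
Qed.

Lemma u_cvg0 d : -1 <= d <= 1 ->
  ((fun N : nat => (1 - d ^+ N.+1) / N.+1%:R) @ \oo --> (0 : R))%classic.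
Proof.
move=> /andP[d1 d2].
have hd : `|d| <= 1 by rewrite ler_norml d1 d2.
apply: (@squeeze_cvgr _ _ _ _ (fun N : nat => - 2 * harmonic N) (fun N : nat => 2 * harmonic N)).
- apply: nearW => N /=.
  have hN : `|d ^+ N.+1| <= 1 by rewrite normrX exprn_ile1.
  have h0 : 0 < N.+1%:R :> R by rewrite ltr0Sn.
  rewrite !ler_pM2r ?invr_gt0 //.
  by move: hN; rewrite ler_norml => /andP[]; lra.
- have -> : (0 : R) = -2 * 0 by rewrite mulr0.
  exact: cvgMl_tmp cvg_harmonic.
- have -> : (0 : R) = 2 * 0 by rewrite mulr0.
  exact: cvgMl_tmp cvg_harmonic.
Qed.

Lemma TT_lim d : -1 <= d -> d < 1 ->
  ((fun N : nat => TT d N / N.+1%:R) @ \oo --> (1 + d) / (1 - d))%classic.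
Proof.
move=> d1 d2.
have h1 : 1 - d != 0 by rewrite subr_eq0 eq_sym lt_eqF.
have -> : (fun N : nat => TT d N / N.+1%:R) =
    (fun N => (1 + d) / (1 - d) - 2 * d / (1 - d) ^+ 2 * ((1 - d ^+ N.+1) / N.+1%:R)).
  apply: funext => N.
  have hT : TT d N = (N.+1%:R * (1 - d ^+ 2) - 2 * d * (1 - d ^+ N.+1)) / (1 - d) ^+ 2.
    by rewrite -TT_closed [(1 - d) ^+ 2 * _]mulrC mulfK // expf_neq0.
  have hN : N.+1%:R != 0 :> R by rewrite pnatr_eq0.
  by rewrite hT; field; rewrite h1 andbT addrC natr1 pnatr_eq0.
have hu : -1 <= d <= 1 by rewrite d1 ltW.
move: (u_cvg0 d hu) => {}hu.
have := cvgB (cvg_cst ((1 + d) / (1 - d))) (@cvgMl_tmp _ _ _ _ _ (2 * d / (1 - d) ^+ 2) _ hu).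
rewrite mulr0 subr0 => H; apply: H.
Qed.
End A.

End LimPart.
Import LimPart.

Module FinalPart.
Set Implicit Arguments. Unset Strict Implicit. Unset Printing Implicit Defensive.
Lemma cvg_sum_fin (R : realType) (I : finType) (u : I -> nat -> R) (l : I -> R) :
  (forall i, (u i @ \oo --> l i)%classic) ->
  ((fun N => \sum_i u i N) @ \oo --> \sum_i l i)%classic.
Proof.
move=> H; rewrite -fct_sumE.
apply: (@big_ind2 _ _ (fun (f : nat -> R) (a : R) => (f @ \oo --> a)%classic)).
- exact: cvg_cst.
- by move=> f1 a1 f2 a2 c1 c2; apply: cvgD.
- by move=> i _; exact: H.
Qed.

Lemma gmono (R : realType) (a b : R) : -1 <= a -> a <= b -> b < 1 ->
  (1 + a) / (1 - a) <= (1 + b) / (1 - b).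
Proof.
move=> a1 ab b1.
have ha : 0 < 1 - a by rewrite subr_gt0 (le_lt_trans ab).
have hb : 0 < 1 - b by rewrite subr_gt0.
rewrite ler_pdivrMr // mulrAC ler_pdivlMr //.
nra.
Qed.

Section C.
Variables (R : realType) (n : nat) (pi : 'I_n -> R) (P : 'M[R]_n).
Hypotheses (pd : prob_dist pi) (Pst : transition_matrix P) (rev : reversible pi P)
  (irr : irreducible P).

Definition sq x := Num.sqrt (pi x).
Lemma sq_gt0 x : 0 < sq x.
Proof. by rewrite sqrtr_gt0 (proj1 pd). Qed.
Lemma sq_neq0 x : sq x != 0.
Proof. by rewrite gt_eqF // sq_gt0. Qed.
Lemma sqsq x : sq x * sq x = pi x.
Proof. by rewrite -expr2 sqr_sqrtr // ltW // (proj1 pd). Qed.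

Definition Asym : 'M[R]_n := \matrix_(x, y) (sq x * P x y / sq y).

Lemma Asym_tr : Asym^T = Asym.
Proof.
apply/matrixP => x y; rewrite !mxE.
have H := rev x y; rewrite -!sqsq in H.
apply/eqP; rewrite eqr_div ?sq_neq0 //; apply/eqP.
by rewrite mulrAC [in RHS]mulrAC -H.
Qed.

Lemma Apow k x y : (Asym ^+ k) x y = sq x * (P ^+ k) x y / sq y.
Proof.
elim: k x y => [|k IH] x y.
  rewrite !expr0 !mxE; case: eqP => [->|_]; first by rewrite mulr1 divff ?sq_neq0.
  by rewrite mulr0 mul0r.
rewrite !exprS -!mulmxE !mxE mulr_sumr mulr_suml; apply: eq_bigr => z _.
rewrite !mxE IH; field; by rewrite !sq_neq0.
Qed.

Lemma quadA (h : 'I_n -> R) k :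
  (\row_x (sq x * h x) *m Asym ^+ k *m (\row_x (sq x * h x))^T) 0 0 = Cov pi P h k.
Proof.
rewrite mxE /Cov; under eq_bigr do rewrite !mxE mulr_suml.
rewrite exchange_big /=; apply: eq_bigr => x _; rewrite mulr_sumr.
apply: eq_bigr => y _; rewrite !mxE Apow -sqsq; field; by rewrite sq_neq0.
Qed.

Lemma eigA (E : 'rV[R]_n) d : E *m Asym = d *: E ->
  \row_x (E 0 x * sq x) *m P = d *: \row_x (E 0 x * sq x).
Proof.
move=> H; apply/rowP => y; move/rowP: H => /(_ y); rewrite !mxE => H.
transitivity ((\sum_x E 0 x * Asym x y) * sq y).
  rewrite mulr_suml; apply: eq_bigr => x _; rewrite !mxE; field; by rewrite sq_neq0.
by rewrite H mulrA.
Qed.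

Lemma rowsq_neq0 (E : 'rV[R]_n) : E != 0 -> \row_x (E 0 x * sq x) != 0.
Proof.
apply: contraNN => /eqP H; apply/eqP/rowP => x; move/rowP: H => /(_ x).
by rewrite !mxE => /eqP; rewrite mulf_eq0 (negbTE (sq_neq0 x)) orbF => /eqP.
Qed.

Lemma inner_z (h : 'I_n -> R) (E : 'rV[R]_n) :
  (\row_x (sq x * h x) *m E^T) 0 0 = \sum_x h x * (\row_x (E 0 x * sq x)) 0 x.
Proof. by rewrite mxE; apply: eq_bigr => x _; rewrite !mxE; ring. Qed.

Lemma eig1_orth (h : 'I_n -> R) (w : 'rV[R]_n) : w *m P = w -> cmean pi h = 0 ->
  \sum_x h x * w 0 x = 0.
Proof.
move=> wP hm.
pose g x := w 0 x / pi x.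
have pine x : pi x != 0 by rewrite gt_eqF // (proj1 pd).
have hg x : \sum_y P x y * g y = g x.
  transitivity ((\sum_y w 0 y * P y x) / pi x).
    rewrite mulr_suml; apply: eq_bigr => y _.
    have Pxy : P x y = pi y * P y x / pi x by rewrite -rev [pi x * _]mulrC mulfK.
    by rewrite Pxy /g; field; rewrite !pine.
  by move/rowP: wP => /(_ x); rewrite mxE => ->.
have gc := fixed_const Pst irr hg.
have wE x : w 0 x = g x * pi x by rewrite /g divfK.
case: (pickP (fun _ : 'I_n => true)) => [x0 _|none]; last first.
  by rewrite big1 // => x; have := none x.
transitivity (g x0 * cmean pi h).
  rewrite /cmean mulr_sumr; apply: eq_bigr => x _; rewrite wE (gc x x0); ring.
by rewrite hm mulr0.
Qed.

Lemma lam_root (lam : 'I_n -> R) d : ordered_spectrum P lam ->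
  (exists2 w : 'rV[R]_n, w *m P = d *: w & w != 0) -> exists j, d = lam j.
Proof.
move=> [cp _] ex.
have : root (char_poly P) d by rewrite -eigenvalue_root_char; apply/eigenvalueP.
rewrite cp /root horner_prod => /prodf_eq0 [j _]; rewrite hornerXsubC subr_eq0 => /eqP ->.
by exists j.
Qed.

Lemma lam0 (lam : 'I_n -> R) (j : 'I_n) : ordered_spectrum P lam -> val j = 0%N -> lam j = 1.
Proof.
move=> os j0.
have w1 : (\row_x pi x) *m P = 1 *: \row_x pi x.
  apply/rowP => y; rewrite !mxE mul1r; under eq_bigr do rewrite mxE rev.
  by rewrite -mulr_sumr (proj2 Pst) mulr1.
have w0 : (\row_x pi x) != 0.
  apply/eqP => /rowP /(_ j); rewrite !mxE => /eqP; by rewrite gt_eqF // (proj1 pd).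
have [j1 e1] := lam_root os (ex_intro2 _ _ (\row_x pi x) w1 w0).
have le1 : lam j1 <= lam j by apply: (proj2 os); rewrite j0.
have : root (char_poly P) (lam j).
  rewrite (proj1 os) /root horner_prod; apply/prodf_eq0; exists j => //.
  by rewrite hornerXsubC subrr.
rewrite -eigenvalue_root_char => /eigenvalueP [w wP wn].
have := eig_bound Pst wn wP; rewrite ler_norml => /andP[_ h1].
by apply/eqP; rewrite eq_le h1 /= (le_trans _ le1) // -e1.
Qed.

Lemma chain (lam f : 'I_n -> R) : ordered_spectrum P lam ->
  exists W d : 'I_n -> R,
   [/\ forall i, 0 <= W i,
       forall i, W i != 0 ->
         [/\ -1 <= d i, d i < 1 & exists j : 'I_n, (0 < j)%N /\ d i = lam j],
       \sum_i W i = \sum_x pi x * (f x - cmean pi f) ^+ 2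
     & asymp_var pi P f (\sum_i W i * ((1 + d i) / (1 - d i)))].
Proof.
move=> os.
set h := fun x => f x - cmean pi f.
have [d [E1 [E2 [eig quad]]]] := @sym_spectral R n Asym Asym_tr.
pose z := \row_x (sq x * h x).
pose W i := ((z *m (E1 i)^T) 0 0)^+2 + ((z *m (E2 i)^T) 0 0)^+2.
have covW k : Cov pi P h k = \sum_i W i * d i ^+ k by rewrite -quadA quad.
have hmean : cmean pi h = 0.
  rewrite /cmean /h; under eq_bigr do rewrite mulrBr.
  by rewrite sumrB -mulr_suml (proj2 pd) mul1r subrr.
have dprop : forall i, W i != 0 ->
    [/\ -1 <= d i, d i < 1 & exists j : 'I_n, (0 < j)%N /\ d i = lam j].
  move=> i Wi.
  have [eig1 [eig2 nz]] := eig i.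
  have e1 := eigA eig1; have e2 := eigA eig2.
  have [w wP wnz] : exists2 w : 'rV[R]_n, w *m P = d i *: w & w != 0.
    by case: nz => [h1|h2]; [exists (\row_x (E1 i 0 x * sq x)) | exists (\row_x (E2 i 0 x * sq x))];
      rewrite // rowsq_neq0.
  have := eig_bound Pst wnz wP; rewrite ler_norml => /andP[dm dp].
  have d1 : d i != 1.
    apply: contra Wi => /eqP di1; rewrite di1 scale1r in e1; rewrite di1 scale1r in e2.
    by rewrite /W !inner_z (eig1_orth e1 hmean) (eig1_orth e2 hmean) expr2 mul0r addr0.
  have [j dj] := lam_root os (ex_intro2 _ _ w wP wnz).
  split => //; first by rewrite lt_neqAle d1 dp.
  exists j; split => //; rewrite lt0n; apply/negP => /eqP j0.
  by move: d1; rewrite dj (lam0 os j0) eqxx.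
exists W, d; split.
- by move=> i; rewrite /W addr_ge0 ?sqr_ge0.
- exact: dprop.
- rewrite (_ : \sum_i W i = Cov pi P h 0).
    rewrite /Cov; apply: eq_bigr => x _; by rewrite expr0 sum_delta -mulrA -expr2.
  by rewrite covW; apply: eq_bigr => i _; rewrite expr0 mulr1.
- rewrite /asymp_var /avg_var.
  have -> : (fun N => path_var pi P f N / N.+1%:R) =
      (fun N => \sum_i W i * (TT R (d i) N / N.+1%:R)).
    apply: funext => N; rewrite (var_formula Pst rev f N) -/h.
    under eq_bigr do under eq_bigr do rewrite covW.
    transitivity ((\sum_i W i * TT R (d i) N) / N.+1%:R); last first.
      by rewrite mulr_suml; apply: eq_bigr => i _; rewrite mulrA.
    congr (_ / _); rewrite /TT.
    transitivity (\sum_(s < N.+1) \sum_i \sum_(t < N.+1) W i * d i ^+ distn' s t).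
      by apply: eq_bigr => s _; rewrite exchange_big.
    rewrite exchange_big /=; apply: eq_bigr => i _; rewrite mulr_sumr.
    by apply: eq_bigr => s _; rewrite mulr_sumr.
  apply: cvg_sum_fin => i.
  case: (eqVneq (W i) 0) => [->|Wi].
    under eq_cvg do rewrite mul0r; rewrite mul0r; exact: cvg_cst.
  have [dm dl _] := dprop i Wi.
  exact: (@cvgMl_tmp _ _ _ _ _ (W i) _ (TT_lim R (d i) dm dl)).
Qed.
End C.


End FinalPart.
Import FinalPart.

Theorem theorem6 (R : realType) (n : nat) (pi : 'I_n -> R) (P Q : 'M[R]_n)
  (lam bet : 'I_n -> R) :
  prob_dist pi ->
  transition_matrix P -> transition_matrix Q ->
  reversible pi P -> reversible pi Q ->
  irreducible P -> irreducible Q ->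
  ordered_spectrum P lam -> ordered_spectrum Q bet ->
  (forall i j : 'I_n, (1 <= i)%N -> (1 <= j)%N -> lam i <= bet j) ->
  efficiency_dominates pi P Q.
Proof.
move=> pd Pst Qst revP revQ irrP irrQ osP osQ hyp f.
have [W [d [W0 Wd WS Pcv]]] := chain pd Pst revP irrP f osP.
have [W' [d' [W0' Wd' WS' Qcv]]] := chain pd Qst revQ irrQ f osQ.
exists (\sum_i W i * ((1 + d i) / (1 - d i))), (\sum_i W' i * ((1 + d' i) / (1 - d' i))).
split => //; split => //.
set vP := \sum_i W i * _; set vQ := \sum_i W' i * _.
set S := \sum_x pi x * _ in WS WS'.
have key : S * vP <= S * vQ.
  rewrite -{1}WS' -{1}WS /vP /vQ mulr_suml [X in _ <= X]mulr_sumr.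
  apply: ler_sum => j _; rewrite mulr_sumr [X in _ <= X]mulr_suml.
  apply: ler_sum => i _.
  case: (eqVneq (W i) 0) => [->|Wi]; first by rewrite !mul0r mulr0.
  case: (eqVneq (W' j) 0) => [->|Wj]; first by rewrite !mul0r mulr0.
  have [dm dl [a [a0 da]]] := Wd i Wi.
  have [dm' dl' [b [b0 db]]] := Wd' j Wj.
  have dd : d i <= d' j by rewrite da db; apply: hyp.
  rewrite mulrCA; apply: ler_wpM2l => //; apply: ler_wpM2l => //; exact: gmono.
have S0 : 0 <= S by apply: sumr_ge0 => x _; rewrite mulr_ge0 ?sqr_ge0 // ltW // (proj1 pd).
case: (eqVneq S 0) => [S00|Sn0]; last first.
  have Sp : 0 < S by rewrite lt_neqAle eq_sym Sn0 S0.
  by rewrite -(ler_pM2l Sp).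

have WP0 := psumr_eq0P (fun i _ => W0 i) (etrans WS S00).
have WQ0 := psumr_eq0P (fun i _ => W0' i) (etrans WS' S00).
rewrite /vP /vQ !big1 // => i _; by rewrite ?WP0 ?WQ0 // mul0r.
Qed.
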